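(* Fix $n\in\mathbb{N}$. For integers $0\le s\le t\le n$ let $\mathcal{M}(n,s,t)$ denote the number of monochromatic Schur triples on $\{1,\dots,n\}$ under the coloring $R^sB^{t-s}R^{n-t}$. Then the minimum of $\mathcal{M}(n,s,t)$ over all such integers $s,t$ is attained at \[ s_0=\Bigl\lfloor\frac{4n+2}{11}\Bigr\rfloor,\qquad t_0=\Bigl\lfloor\frac{10n}{11}\Bigr\rfloor . \]
   Context: A Schur triple on $[n]=\{1,\dots,n\}$ is an ordered triple $(x,y,z)\in[n]^3$ with $z=x+y$ (ordered, so $(x,y,x+y)$ and $(y,x,x+y)$ are distinct if $x\ne y$); it is monochromatic under a coloring $\chi$ if $\chi(x)=\chi(y)=\chi(z)$. The coloring $R^sB^{t-s}R^{n-t}$ colors $1,\dots,s$ red, $s+1,\dots,t$ blue, and $t+1,\dots,n$ red. *)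

(* Defs.v *)
From mathcomp Require Import all_boot.
Set Implicit Arguments. Unset Strict Implicit. Unset Printing Implicit Defensive.

(* Coloring R^s B^(t-s) R^(n-t) of [n]: x is red iff x <= s or t < x
   (true = red, false = blue). *)
Definition red (s t x : nat) : bool := (x <= s) || (t < x).

Definition schurM (n s t : nat) : nat :=
  \sum_(1 <= x < n.+1) \sum_(1 <= y < n.+1)
     ((x + y <= n) && (red s t x == red s t y) && (red s t y == red s t (x + y))).

(* Main.v *)
From Stdlib Require Import ZArith Lia Psatz.
Require Import Defs.
From mathcomp Require Import all_boot zify.

Definition tri (k : nat) : nat := k * (k - 1).

Definition DS (n : nat) (f : nat -> nat -> nat) : nat :=
  \sum_(1 <= x < n.+1) \sum_(1 <= y < n.+1) f x y.

Lemma DS_add n f g : DS n f + DS n g = DS n (fun x y => f x y + g x y).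
Proof.
rewrite /DS -big_split /=; apply: eq_bigr => x _; by rewrite -big_split.
Qed.

Definition tr (p q m : nat) (x y : nat) : nat := (p <= x) && (q <= y) && (x + y <= m).

Lemma count_int N a b : 1 <= a ->
  \sum_(1 <= y < N.+1) ((a <= y) && (y <= b) : nat) = (minn b N).+1 - a.
Proof.
move=> ha; elim: N => [|N IH]; first by rewrite big_geq //; lia.
rewrite big_nat_recr //= IH.
case: (leqP a N.+1) => h1; case: (leqP N.+1 b) => h2 /=; lia.
Qed.

Lemma inner_tri N p q m x : 1 <= q -> m <= N ->
  \sum_(1 <= y < N.+1) tr p q m x y = (p <= x) * (m.+1 - q - x).
Proof.
move=> hq hm.
rewrite (eq_bigr (fun y => ((p <= x) * ((q <= y) && (y <= m - x)))%N)); last first.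
  move=> y _; rewrite /tr; case: (p <= x) => /=; last by rewrite mul0n.
  rewrite mul1n; congr nat_of_bool; apply/idP/idP.
  - move/andP=> [h1 h2]; apply/andP; split => //; lia.
  - move/andP=> [h1 h2]; apply/andP; split => //; lia.
rewrite -big_distrr /= count_int //.
have -> : minn (m - x) N = m - x by apply/minn_idPl; lia.
case: (p <= x); rewrite ?mul0n ?mul1n //; lia.
Qed.

Lemma tri_succ j : tri j.+1 = tri j + 2 * j.
Proof. rewrite /tri; nia. Qed.

Lemma outer_tri N p K : 1 <= p ->
  2 * (\sum_(1 <= x < N.+1) (p <= x) * (K - x)) + tri (K - maxn N p.-1)
  = tri (K.+1 - p).
Proof.
move=> hp; elim: N => [|N IH].
  rewrite big_geq // muln0 add0n; congr tri; lia.
rewrite big_nat_recr //= mulnDr -addnA.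
case: (leqP p N.+1) => h.
- rewrite mul1n.
  have E1 : maxn N p.-1 = N by lia.
  have E2 : maxn N.+1 p.-1 = N.+1 by lia.
  rewrite E1 in IH; rewrite E2 -IH; congr (_ + _).
  case: (leqP K N) => hK.
  + have -> : K - N.+1 = 0 by lia. have -> : K - N = 0 by lia. by [].
  + have -> : K - N = (K - N.+1).+1 by lia.
    rewrite tri_succ; lia.
- rewrite mul0n add0n -IH; congr (_ + tri _); lia.
Qed.

Lemma DS_tri n p q m : 1 <= p -> 1 <= q -> m <= n ->
  2 * DS n (tr p q m) = tri (m.+2 - p - q).
Proof.
move=> hp hq hm; rewrite /DS.
rewrite (eq_bigr (fun x => (p <= x) * (m.+1 - q - x))); last first.
  by move=> x _; rewrite inner_tri.
have := outer_tri n p (m.+1 - q) hp.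
have -> : m.+1 - q - maxn n p.-1 = 0 by lia.
rewrite addn0 => ->; congr tri; lia.
Qed.

Lemma pointwise n s t x y : s <= t -> t <= n -> 1 <= x -> 1 <= y ->
  ((x + y <= n) && (red s t x == red s t y) && (red s t y == red s t (x + y)) : nat)
  + tr s.+1 1 n x y + tr 1 s.+1 n x y + tr 1 1 t x y + tr t.+1 s.+1 n x y + tr s.+1 t.+1 n x y
  = tr 1 1 s x y + tr 1 1 n x y + tr s.+1 s.+1 n x y + tr s.+1 1 t x y + tr 1 s.+1 t x y
    + tr t.+1 1 n x y + tr 1 t.+1 n x y + tr t.+1 t.+1 n x y.
Proof.
move=> hst htn hx hy; rewrite /tr /red hx hy.
case: (leqP x s) => h1; case: (leqP x t) => h2; case: (leqP y s) => h3;
case: (leqP y t) => h4; case: (leqP (x + y) s) => h5; case: (leqP (x + y) t) => h6;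
case: (leqP (x + y) n) => h7 => //=; lia.
Qed.

Lemma formula n s t : s <= t -> t <= n ->
  2 * schurM n s t + 2 * tri (n - s) + tri t + 2 * tri (n - t - s)
  = tri s + tri n + tri (n - 2 * s) + 2 * tri (t - s) + 2 * tri (n - t) + tri (n - 2 * t).
Proof.
move=> hst htn.
have E : schurM n s t = DS n (fun x y =>
   ((x + y <= n) && (red s t x == red s t y) && (red s t y == red s t (x + y)) : nat)) by [].
have P : DS n (fun x y => ((x + y <= n) && (red s t x == red s t y) && (red s t y == red s t (x + y)) : nat)
  + tr s.+1 1 n x y + tr 1 s.+1 n x y + tr 1 1 t x y + tr t.+1 s.+1 n x y + tr s.+1 t.+1 n x y)
  = DS n (fun x y => tr 1 1 s x y + tr 1 1 n x y + tr s.+1 s.+1 n x y + tr s.+1 1 t x y + tr 1 s.+1 t x y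
    + tr t.+1 1 n x y + tr 1 t.+1 n x y + tr t.+1 t.+1 n x y).
  rewrite /DS; apply: eq_big_nat => x /andP[hx _]; apply: eq_big_nat => y /andP[hy _].
  exact: pointwise.
rewrite -!DS_add in P.
have := congr1 (muln 2) P; rewrite !mulnDr -E.
rewrite !DS_tri //; try lia.
have -> : n.+2 - s.+1 - 1 = n - s by lia.
have -> : n.+2 - 1 - s.+1 = n - s by lia.
have -> : t.+2 - 1 - 1 = t by lia.
have -> : n.+2 - t.+1 - s.+1 = n - t - s by lia.
have -> : n.+2 - s.+1 - t.+1 = n - t - s by lia.
have -> : s.+2 - 1 - 1 = s by lia.
have -> : n.+2 - 1 - 1 = n by lia.
have -> : n.+2 - s.+1 - s.+1 = n - 2 * s by lia.
have -> : t.+2 - s.+1 - 1 = t - s by lia.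
have -> : t.+2 - 1 - s.+1 = t - s by lia.
have -> : n.+2 - t.+1 - 1 = n - t by lia.
have -> : n.+2 - 1 - t.+1 = n - t by lia.
have -> : n.+2 - t.+1 - t.+1 = n - 2 * t by lia.
lia.
Qed.
Open Scope Z_scope.
Definition tz (k : Z) := k * (k - 1).
Definition Q2 (a b c : Z) := a * (a - 1) + b * (b - 1) + 2 * (c * (c - 1)).
Lemma R1 n s t : 0 <= s <= t -> t <= n -> n < 2 * s ->
  Q2 (t - s) (2 * s - t) (n - t) <=
  tz s + tz n - 2 * tz (n - s) - tz t + 2 * tz (t - s) + 2 * tz (n - t).
Proof. intros; unfold Q2, tz; nia. Qed.
Lemma R2 n s t : 0 <= s <= t -> t <= n -> 2 * s <= n -> n < s + t ->
  Q2 s (t - 2 * s) (n - t) <=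
  tz s + tz n - 2 * tz (n - s) + tz (n - 2 * s) - tz t + 2 * tz (t - s) + 2 * tz (n - t).
Proof. intros; unfold Q2, tz; nia. Qed.
Lemma R3 n s t : 0 <= s <= t -> t <= n -> s + t <= n -> n < 2 * t ->
  Q2 (n - t) (t - s - (n - t)) s <=
  tz s + tz n - 2 * tz (n - s) + tz (n - 2 * s) - tz t + 2 * tz (t - s) + 2 * tz (n - t) - 2 * tz (n - t - s).
Proof. intros; unfold Q2, tz; nia. Qed.
Lemma R4 n s t : 0 <= s <= t -> t <= n -> 2 * t <= n ->
  Q2 (t - s) (n - t - (t - 2 * s)) 0 <=
  tz s + tz n - 2 * tz (n - s) + tz (n - 2 * s) - tz t + 2 * tz (t - s) + 2 * tz (n - t) - 2 * tz (n - t - s) + tz (n - 2 * t).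
Proof. intros; unfold Q2, tz; nia. Qed.

Lemma D_0 i j : 0 <= 5*i*i - 4*i*j + 3*j*j + (1)*i + (1)*j.
Proof.
assert (Hi : i <= -1 \/ i = 0 \/ 1 <= i) by lia.
assert (Hj : j <= -1 \/ j = 0 \/ 1 <= j) by lia.
pose proof (Z.square_nonneg (2*i-j)). pose proof (Z.square_nonneg (i-j)).
pose proof (Z.square_nonneg (i-2*j)).
destruct Hi as [Hi|[Hi|Hi]]; destruct Hj as [Hj|[Hj|Hj]]; try subst i; try subst j; nia.
Qed.
Lemma Q2min_0 q a b c : 2*a+b+c = 11*q+0 ->
  Q2 (4*q+0) (2*q+0) (q+0) <= Q2 a b c.
Proof.
intros H. assert (Hb : b = 11*q+0-2*a-c) by lia. subst b.
pose proof (D_0 (a-(4*q+0)) (q+0-c)) as HD.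
unfold Q2; nia.
Qed.
Lemma D_1 i j : 0 <= 5*i*i - 4*i*j + 3*j*j + (1)*i + (-3)*j.
Proof.
assert (Hi : i <= -1 \/ i = 0 \/ 1 <= i) by lia.
assert (Hj : j <= -1 \/ j = 0 \/ 1 <= j) by lia.
pose proof (Z.square_nonneg (2*i-j)). pose proof (Z.square_nonneg (i-j)).
pose proof (Z.square_nonneg (i-2*j)).
destruct Hi as [Hi|[Hi|Hi]]; destruct Hj as [Hj|[Hj|Hj]]; try subst i; try subst j; nia.
Qed.
Lemma Q2min_1 q a b c : 2*a+b+c = 11*q+1 ->
  Q2 (4*q+0) (2*q+0) (q+1) <= Q2 a b c.
Proof.
intros H. assert (Hb : b = 11*q+1-2*a-c) by lia. subst b.
pose proof (D_1 (a-(4*q+0)) (q+1-c)) as HD.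
unfold Q2; nia.
Qed.
Lemma D_2 i j : 0 <= 5*i*i - 4*i*j + 3*j*j + (-3)*i + (-1)*j.
Proof.
assert (Hi : i <= -1 \/ i = 0 \/ 1 <= i) by lia.
assert (Hj : j <= -1 \/ j = 0 \/ 1 <= j) by lia.
pose proof (Z.square_nonneg (2*i-j)). pose proof (Z.square_nonneg (i-j)).
pose proof (Z.square_nonneg (i-2*j)).
destruct Hi as [Hi|[Hi|Hi]]; destruct Hj as [Hj|[Hj|Hj]]; try subst i; try subst j; nia.
Qed.
Lemma Q2min_2 q a b c : 2*a+b+c = 11*q+2 ->
  Q2 (4*q+0) (2*q+1) (q+1) <= Q2 a b c.
Proof.
intros H. assert (Hb : b = 11*q+2-2*a-c) by lia. subst b.
pose proof (D_2 (a-(4*q+0)) (q+1-c)) as HD.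
unfold Q2; nia.
Qed.
Lemma D_3 i j : 0 <= 5*i*i - 4*i*j + 3*j*j + (3)*i + (-3)*j.
Proof.
assert (Hi : i <= -1 \/ i = 0 \/ 1 <= i) by lia.
assert (Hj : j <= -1 \/ j = 0 \/ 1 <= j) by lia.
pose proof (Z.square_nonneg (2*i-j)). pose proof (Z.square_nonneg (i-j)).
pose proof (Z.square_nonneg (i-2*j)).
destruct Hi as [Hi|[Hi|Hi]]; destruct Hj as [Hj|[Hj|Hj]]; try subst i; try subst j; nia.
Qed.
Lemma Q2min_3 q a b c : 2*a+b+c = 11*q+3 ->
  Q2 (4*q+1) (2*q+0) (q+1) <= Q2 a b c.
Proof.
intros H. assert (Hb : b = 11*q+3-2*a-c) by lia. subst b.
pose proof (D_3 (a-(4*q+1)) (q+1-c)) as HD.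
unfold Q2; nia.
Qed.
Lemma D_4 i j : 0 <= 5*i*i - 4*i*j + 3*j*j + (-1)*i + (-1)*j.
Proof.
assert (Hi : i <= -1 \/ i = 0 \/ 1 <= i) by lia.
assert (Hj : j <= -1 \/ j = 0 \/ 1 <= j) by lia.
pose proof (Z.square_nonneg (2*i-j)). pose proof (Z.square_nonneg (i-j)).
pose proof (Z.square_nonneg (i-2*j)).
destruct Hi as [Hi|[Hi|Hi]]; destruct Hj as [Hj|[Hj|Hj]]; try subst i; try subst j; nia.
Qed.
Lemma Q2min_4 q a b c : 2*a+b+c = 11*q+4 ->
  Q2 (4*q+1) (2*q+1) (q+1) <= Q2 a b c.
Proof.
intros H. assert (Hb : b = 11*q+4-2*a-c) by lia. subst b.
pose proof (D_4 (a-(4*q+1)) (q+1-c)) as HD.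
unfold Q2; nia.
Qed.
Lemma D_5 i j : 0 <= 5*i*i - 4*i*j + 3*j*j + (5)*i + (-3)*j.
Proof.
assert (Hi : i <= -1 \/ i = 0 \/ 1 <= i) by lia.
assert (Hj : j <= -1 \/ j = 0 \/ 1 <= j) by lia.
pose proof (Z.square_nonneg (2*i-j)). pose proof (Z.square_nonneg (i-j)).
pose proof (Z.square_nonneg (i-2*j)).
destruct Hi as [Hi|[Hi|Hi]]; destruct Hj as [Hj|[Hj|Hj]]; try subst i; try subst j; nia.
Qed.
Lemma Q2min_5 q a b c : 2*a+b+c = 11*q+5 ->
  Q2 (4*q+2) (2*q+0) (q+1) <= Q2 a b c.
Proof.
intros H. assert (Hb : b = 11*q+5-2*a-c) by lia. subst b.
pose proof (D_5 (a-(4*q+2)) (q+1-c)) as HD.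
unfold Q2; nia.
Qed.
Lemma D_6 i j : 0 <= 5*i*i - 4*i*j + 3*j*j + (1)*i + (-1)*j.
Proof.
assert (Hi : i <= -1 \/ i = 0 \/ 1 <= i) by lia.
assert (Hj : j <= -1 \/ j = 0 \/ 1 <= j) by lia.
pose proof (Z.square_nonneg (2*i-j)). pose proof (Z.square_nonneg (i-j)).
pose proof (Z.square_nonneg (i-2*j)).
destruct Hi as [Hi|[Hi|Hi]]; destruct Hj as [Hj|[Hj|Hj]]; try subst i; try subst j; nia.
Qed.
Lemma Q2min_6 q a b c : 2*a+b+c = 11*q+6 ->
  Q2 (4*q+2) (2*q+1) (q+1) <= Q2 a b c.
Proof.
intros H. assert (Hb : b = 11*q+6-2*a-c) by lia. subst b.
pose proof (D_6 (a-(4*q+2)) (q+1-c)) as HD.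
unfold Q2; nia.
Qed.
Lemma D_7 i j : 0 <= 5*i*i - 4*i*j + 3*j*j + (-3)*i + (1)*j.
Proof.
assert (Hi : i <= -1 \/ i = 0 \/ 1 <= i) by lia.
assert (Hj : j <= -1 \/ j = 0 \/ 1 <= j) by lia.
pose proof (Z.square_nonneg (2*i-j)). pose proof (Z.square_nonneg (i-j)).
pose proof (Z.square_nonneg (i-2*j)).
destruct Hi as [Hi|[Hi|Hi]]; destruct Hj as [Hj|[Hj|Hj]]; try subst i; try subst j; nia.
Qed.
Lemma Q2min_7 q a b c : 2*a+b+c = 11*q+7 ->
  Q2 (4*q+2) (2*q+2) (q+1) <= Q2 a b c.
Proof.
intros H. assert (Hb : b = 11*q+7-2*a-c) by lia. subst b.
pose proof (D_7 (a-(4*q+2)) (q+1-c)) as HD.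
unfold Q2; nia.
Qed.
Lemma D_8 i j : 0 <= 5*i*i - 4*i*j + 3*j*j + (3)*i + (-1)*j.
Proof.
assert (Hi : i <= -1 \/ i = 0 \/ 1 <= i) by lia.
assert (Hj : j <= -1 \/ j = 0 \/ 1 <= j) by lia.
pose proof (Z.square_nonneg (2*i-j)). pose proof (Z.square_nonneg (i-j)).
pose proof (Z.square_nonneg (i-2*j)).
destruct Hi as [Hi|[Hi|Hi]]; destruct Hj as [Hj|[Hj|Hj]]; try subst i; try subst j; nia.
Qed.
Lemma Q2min_8 q a b c : 2*a+b+c = 11*q+8 ->
  Q2 (4*q+3) (2*q+1) (q+1) <= Q2 a b c.
Proof.
intros H. assert (Hb : b = 11*q+8-2*a-c) by lia. subst b.
pose proof (D_8 (a-(4*q+3)) (q+1-c)) as HD.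
unfold Q2; nia.
Qed.
Lemma D_9 i j : 0 <= 5*i*i - 4*i*j + 3*j*j + (-1)*i + (1)*j.
Proof.
assert (Hi : i <= -1 \/ i = 0 \/ 1 <= i) by lia.
assert (Hj : j <= -1 \/ j = 0 \/ 1 <= j) by lia.
pose proof (Z.square_nonneg (2*i-j)). pose proof (Z.square_nonneg (i-j)).
pose proof (Z.square_nonneg (i-2*j)).
destruct Hi as [Hi|[Hi|Hi]]; destruct Hj as [Hj|[Hj|Hj]]; try subst i; try subst j; nia.
Qed.
Lemma Q2min_9 q a b c : 2*a+b+c = 11*q+9 ->
  Q2 (4*q+3) (2*q+2) (q+1) <= Q2 a b c.
Proof.
intros H. assert (Hb : b = 11*q+9-2*a-c) by lia. subst b.
pose proof (D_9 (a-(4*q+3)) (q+1-c)) as HD.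
unfold Q2; nia.
Qed.
Lemma D_10 i j : 0 <= 5*i*i - 4*i*j + 3*j*j + (-5)*i + (3)*j.
Proof.
assert (Hi : i <= -1 \/ i = 0 \/ 1 <= i) by lia.
assert (Hj : j <= -1 \/ j = 0 \/ 1 <= j) by lia.
pose proof (Z.square_nonneg (2*i-j)). pose proof (Z.square_nonneg (i-j)).
pose proof (Z.square_nonneg (i-2*j)).
destruct Hi as [Hi|[Hi|Hi]]; destruct Hj as [Hj|[Hj|Hj]]; try subst i; try subst j; nia.
Qed.
Lemma Q2min_10 q a b c : 2*a+b+c = 11*q+10 ->
  Q2 (4*q+3) (2*q+3) (q+1) <= Q2 a b c.
Proof.
intros H. assert (Hb : b = 11*q+10-2*a-c) by lia. subst b.
pose proof (D_10 (a-(4*q+3)) (q+1-c)) as HD.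
unfold Q2; nia.
Qed.
Lemma R2eq n s t : tz s + tz n - 2 * tz (n - s) + tz (n - 2 * s) - tz t + 2 * tz (t - s) + 2 * tz (n - t)
  = Q2 s (t - 2 * s) (n - t).
Proof. unfold tz, Q2; ring. Qed.
Lemma tz01 k : 0 <= k <= 1 -> tz k = 0.
Proof. intros; unfold tz; assert (k = 0 \/ k = 1) as [->| ->] by lia; reflexivity. Qed.
Close Scope Z_scope.

Lemma triZ k : Z.of_nat (tri k) = tz (Z.of_nat k).
Proof. rewrite /tri /tz Nat2Z.inj_mul; case: k => [|k]; first by [].
have -> : Z.of_nat (k.+1 - 1) = (Z.of_nat k.+1 - 1)%Z by lia.
by []. Qed.

Lemma formulaZ n s t : s <= t -> t <= n ->
  (2 * Z.of_nat (schurM n s t) + 2 * tz (Z.of_nat (n - s)) + tz (Z.of_nat t) + 2 * tz (Z.of_nat (n - t - s))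
  = tz (Z.of_nat s) + tz (Z.of_nat n) + tz (Z.of_nat (n - 2 * s)) + 2 * tz (Z.of_nat (t - s))
    + 2 * tz (Z.of_nat (n - t)) + tz (Z.of_nat (n - 2 * t)))%Z.
Proof.
move=> h1 h2; have := f_equal Z.of_nat (formula n s t h1 h2).
rewrite !Nat2Z.inj_add !triZ; lia.
Qed.

Theorem lemma2p2 (n : nat) :
  let s0 := (4 * n + 2) %/ 11 in
  let t0 := (10 * n) %/ 11 in
  [/\ s0 <= t0, t0 <= n &
      forall s t : nat, s <= t -> t <= n -> schurM n s0 t0 <= schurM n s t].
Proof.
move=> s0 t0.
have hs0 : s0 <= t0 by rewrite /s0 /t0; lia.
have ht0 : t0 <= n by rewrite /t0; lia.
split => // s t hst htn.
have L : exists a b c : Z, (2 * a + b + c = Z.of_nat n)%Z /\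
   (Q2 a b c <= 2 * Z.of_nat (schurM n s t))%Z.
  have F := formulaZ n s t hst htn.
  have e4 : Z.of_nat (n - s) = (Z.of_nat n - Z.of_nat s)%Z by lia.
  have e5 : Z.of_nat (t - s) = (Z.of_nat t - Z.of_nat s)%Z by lia.
  have e6 : Z.of_nat (n - t) = (Z.of_nat n - Z.of_nat t)%Z by lia.
  rewrite e4 e5 e6 in F.
  case: (ltnP n (2 * s)) => h1.
    have e1 : Z.of_nat (n - 2 * s) = 0%Z by lia.
    have e2 : Z.of_nat (n - t - s) = 0%Z by lia.
    have e3 : Z.of_nat (n - 2 * t) = 0%Z by lia.
    rewrite e1 e2 e3 in F.
    exists (Z.of_nat t - Z.of_nat s)%Z, (2 * Z.of_nat s - Z.of_nat t)%Z, (Z.of_nat n - Z.of_nat t)%Z.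
    split; first lia.
    have := R1 (Z.of_nat n) (Z.of_nat s) (Z.of_nat t).
    have H0 : tz 0 = 0%Z by []. rewrite H0 in F. lia.
  have e1 : Z.of_nat (n - 2 * s) = (Z.of_nat n - 2 * Z.of_nat s)%Z by lia.
  rewrite e1 in F.
  case: (ltnP n (s + t)) => h2.
    have e2 : Z.of_nat (n - t - s) = 0%Z by lia.
    have e3 : Z.of_nat (n - 2 * t) = 0%Z by lia.
    rewrite e2 e3 in F.
    exists (Z.of_nat s), (Z.of_nat t - 2 * Z.of_nat s)%Z, (Z.of_nat n - Z.of_nat t)%Z.
    split; first lia.
    have := R2 (Z.of_nat n) (Z.of_nat s) (Z.of_nat t).
    have H0 : tz 0 = 0%Z by []. rewrite H0 in F. lia.
  have e2 : Z.of_nat (n - t - s) = (Z.of_nat n - Z.of_nat t - Z.of_nat s)%Z by lia.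
  rewrite e2 in F.
  case: (ltnP n (2 * t)) => h3.
    have e3 : Z.of_nat (n - 2 * t) = 0%Z by lia.
    rewrite e3 in F.
    exists (Z.of_nat n - Z.of_nat t)%Z, (Z.of_nat t - Z.of_nat s - (Z.of_nat n - Z.of_nat t))%Z, (Z.of_nat s).
    split; first lia.
    have := R3 (Z.of_nat n) (Z.of_nat s) (Z.of_nat t).
    have H0 : tz 0 = 0%Z by []. rewrite H0 in F. lia.
  have e3 : Z.of_nat (n - 2 * t) = (Z.of_nat n - 2 * Z.of_nat t)%Z by lia.
  rewrite e3 in F.
  exists (Z.of_nat t - Z.of_nat s)%Z, (Z.of_nat n - Z.of_nat t - (Z.of_nat t - 2 * Z.of_nat s))%Z, 0%Z.
  split; first lia.
  have := R4 (Z.of_nat n) (Z.of_nat s) (Z.of_nat t).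
  lia.
have O : (2 * Z.of_nat (schurM n s0 t0) =
   Q2 (Z.of_nat s0) (Z.of_nat t0 - 2 * Z.of_nat s0) (Z.of_nat n - Z.of_nat t0))%Z.
  have F := formulaZ n s0 t0 hs0 ht0.
  have e4 : Z.of_nat (n - s0) = (Z.of_nat n - Z.of_nat s0)%Z by lia.
  have e5 : Z.of_nat (t0 - s0) = (Z.of_nat t0 - Z.of_nat s0)%Z by lia.
  have e6 : Z.of_nat (n - t0) = (Z.of_nat n - Z.of_nat t0)%Z by lia.
  have e1 : Z.of_nat (n - 2 * s0) = (Z.of_nat n - 2 * Z.of_nat s0)%Z by rewrite /s0; lia.
  rewrite e1 e4 e5 e6 in F.
  rewrite (@tz01 (Z.of_nat (n - t0 - s0))) in F; last by rewrite /s0 /t0; lia.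
  rewrite (@tz01 (Z.of_nat (n - 2 * t0))) in F; last by rewrite /t0; lia.
  have := R2eq (Z.of_nat n) (Z.of_nat s0) (Z.of_nat t0).
  lia.
have C : forall a b c : Z, (2 * a + b + c = Z.of_nat n)%Z ->
   (Q2 (Z.of_nat s0) (Z.of_nat t0 - 2 * Z.of_nat s0) (Z.of_nat n - Z.of_nat t0) <= Q2 a b c)%Z.
  move=> a b c H.
  set q := n %/ 11.
  have [r [hr hn]] : exists r, r < 11 /\ n = 11 * q + r.
    exists (n %% 11); split; first by rewrite ltn_pmod.
    by rewrite /q mulnC -divn_eq.
  rewrite hn in H.
  case: r hr hn H => [|[|[|[|[|[|[|[|[|[|[|r]]]]]]]]]]] hr hn H; last by lia.
  - have es0 : Z.of_nat s0 = (4 * Z.of_nat q + 0)%Z by rewrite /s0; lia.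
    have et0 : (Z.of_nat t0 - 2 * Z.of_nat s0 = 2 * Z.of_nat q + 0)%Z by rewrite /s0 /t0; lia.
    have ec0 : (Z.of_nat n - Z.of_nat t0 = Z.of_nat q + 0)%Z by rewrite /t0; lia.
    rewrite et0 ec0 es0; apply: Q2min_0; lia.
  - have es0 : Z.of_nat s0 = (4 * Z.of_nat q + 0)%Z by rewrite /s0; lia.
    have et0 : (Z.of_nat t0 - 2 * Z.of_nat s0 = 2 * Z.of_nat q + 0)%Z by rewrite /s0 /t0; lia.
    have ec0 : (Z.of_nat n - Z.of_nat t0 = Z.of_nat q + 1)%Z by rewrite /t0; lia.
    rewrite et0 ec0 es0; apply: Q2min_1; lia.
  - have es0 : Z.of_nat s0 = (4 * Z.of_nat q + 0)%Z by rewrite /s0; lia.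
    have et0 : (Z.of_nat t0 - 2 * Z.of_nat s0 = 2 * Z.of_nat q + 1)%Z by rewrite /s0 /t0; lia.
    have ec0 : (Z.of_nat n - Z.of_nat t0 = Z.of_nat q + 1)%Z by rewrite /t0; lia.
    rewrite et0 ec0 es0; apply: Q2min_2; lia.
  - have es0 : Z.of_nat s0 = (4 * Z.of_nat q + 1)%Z by rewrite /s0; lia.
    have et0 : (Z.of_nat t0 - 2 * Z.of_nat s0 = 2 * Z.of_nat q + 0)%Z by rewrite /s0 /t0; lia.
    have ec0 : (Z.of_nat n - Z.of_nat t0 = Z.of_nat q + 1)%Z by rewrite /t0; lia.
    rewrite et0 ec0 es0; apply: Q2min_3; lia.
  - have es0 : Z.of_nat s0 = (4 * Z.of_nat q + 1)%Z by rewrite /s0; lia.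
    have et0 : (Z.of_nat t0 - 2 * Z.of_nat s0 = 2 * Z.of_nat q + 1)%Z by rewrite /s0 /t0; lia.
    have ec0 : (Z.of_nat n - Z.of_nat t0 = Z.of_nat q + 1)%Z by rewrite /t0; lia.
    rewrite et0 ec0 es0; apply: Q2min_4; lia.
  - have es0 : Z.of_nat s0 = (4 * Z.of_nat q + 2)%Z by rewrite /s0; lia.
    have et0 : (Z.of_nat t0 - 2 * Z.of_nat s0 = 2 * Z.of_nat q + 0)%Z by rewrite /s0 /t0; lia.
    have ec0 : (Z.of_nat n - Z.of_nat t0 = Z.of_nat q + 1)%Z by rewrite /t0; lia.
    rewrite et0 ec0 es0; apply: Q2min_5; lia.
  - have es0 : Z.of_nat s0 = (4 * Z.of_nat q + 2)%Z by rewrite /s0; lia.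
    have et0 : (Z.of_nat t0 - 2 * Z.of_nat s0 = 2 * Z.of_nat q + 1)%Z by rewrite /s0 /t0; lia.
    have ec0 : (Z.of_nat n - Z.of_nat t0 = Z.of_nat q + 1)%Z by rewrite /t0; lia.
    rewrite et0 ec0 es0; apply: Q2min_6; lia.
  - have es0 : Z.of_nat s0 = (4 * Z.of_nat q + 2)%Z by rewrite /s0; lia.
    have et0 : (Z.of_nat t0 - 2 * Z.of_nat s0 = 2 * Z.of_nat q + 2)%Z by rewrite /s0 /t0; lia.
    have ec0 : (Z.of_nat n - Z.of_nat t0 = Z.of_nat q + 1)%Z by rewrite /t0; lia.
    rewrite et0 ec0 es0; apply: Q2min_7; lia.
  - have es0 : Z.of_nat s0 = (4 * Z.of_nat q + 3)%Z by rewrite /s0; lia.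
    have et0 : (Z.of_nat t0 - 2 * Z.of_nat s0 = 2 * Z.of_nat q + 1)%Z by rewrite /s0 /t0; lia.
    have ec0 : (Z.of_nat n - Z.of_nat t0 = Z.of_nat q + 1)%Z by rewrite /t0; lia.
    rewrite et0 ec0 es0; apply: Q2min_8; lia.
  - have es0 : Z.of_nat s0 = (4 * Z.of_nat q + 3)%Z by rewrite /s0; lia.
    have et0 : (Z.of_nat t0 - 2 * Z.of_nat s0 = 2 * Z.of_nat q + 2)%Z by rewrite /s0 /t0; lia.
    have ec0 : (Z.of_nat n - Z.of_nat t0 = Z.of_nat q + 1)%Z by rewrite /t0; lia.
    rewrite et0 ec0 es0; apply: Q2min_9; lia.
  - have es0 : Z.of_nat s0 = (4 * Z.of_nat q + 3)%Z by rewrite /s0; lia.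
    have et0 : (Z.of_nat t0 - 2 * Z.of_nat s0 = 2 * Z.of_nat q + 3)%Z by rewrite /s0 /t0; lia.
    have ec0 : (Z.of_nat n - Z.of_nat t0 = Z.of_nat q + 1)%Z by rewrite /t0; lia.
    rewrite et0 ec0 es0; apply: Q2min_10; lia.
case: L => a [b [c [h1 h2]]].
have := C a b c h1.
lia.
Qed.
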